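(* The functions \[ \Phi(x)=x\,\frac{\mathrm{Ai}'(a_1+x)}{\mathrm{Ai}(a_1+x)}\qquad\text{and}\qquad \Psi(x)=\frac{\mathrm{Ai}'(a_1+x)}{\mathrm{Ai}(a_1+x)} \] are infinitely differentiable and monotonically decreasing on $x>0$, and $\Phi(0)=1$ (i.e. $\lim_{x\to0^+}\Phi(x)=1$).
   Context: $\mathrm{Ai}$ is the Airy function, the solution of $\mathrm{Ai}''(x)=x\,\mathrm{Ai}(x)$ with $\mathrm{Ai}(x)\to0$ as $x\to+\infty$; its zeros are all real and negative, and $a_1\approx-2.338$ is its largest zero. *)

(* Defs.v *)
From Stdlib Require Import Reals.
From Coquelicot Require Import Coquelicot.
Open Scope R_scope.

(* This is the defining property of Ai given in the context; it determines Ai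
   up to a (nonzero) multiplicative constant, and the statement below only
   involves the scale-invariant ratio f'/f. *)
Definition is_Airy (f : R -> R) : Prop :=
  (forall x, ex_derive f x) /\
  (forall x, is_derive (Derive f) x (x * f x)) /\
  is_lim f p_infty 0.

Definition largest_zero (f : R -> R) (a : R) : Prop :=
  f a = 0 /\ forall x, a < x -> f x <> 0.

Definition Airy_Psi (f : R -> R) (a : R) (x : R) : R :=
  Derive f (a + x) / f (a + x).
Definition Airy_Phi (f : R -> R) (a : R) (x : R) : R :=
  x * Airy_Psi f a x.

(* Main.v *)
Require Import Defs.
From Stdlib Require Import Reals Lra Classical.
From Coquelicot Require Import Coquelicot.
Open Scope R_scope.

Inductive ex := EX | EF | EDF | EI | EC (c:R) | EA (e1 e2:ex) | EM (e1 e2:ex).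

Fixpoint ev (f:R->R) (a:R) (e:ex) (x:R) : R :=
  match e with
  | EX => x | EF => f (a+x) | EDF => Derive f (a+x) | EI => / f (a+x)
  | EC c => c | EA e1 e2 => ev f a e1 x + ev f a e2 x
  | EM e1 e2 => ev f a e1 x * ev f a e2 x end.

Fixpoint dd (a:R) (e:ex) : ex :=
  match e with
  | EX => EC 1 | EF => EDF | EDF => EM (EA (EC a) EX) EF
  | EI => EM (EC (-1)) (EM EDF (EM EI EI))
  | EC _ => EC 0 | EA e1 e2 => EA (dd a e1) (dd a e2)
  | EM e1 e2 => EA (EM (dd a e1) e2) (EM e1 (dd a e2)) end.

Fixpoint noinv (e:ex) : bool :=
  match e with EI => false | EA e1 e2 | EM e1 e2 => noinv e1 && noinv e2 | _ => true end.

Fixpoint itd (a:R) (n:nat) (e:ex) : ex :=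
  match n with O => e | S n => dd a (itd a n e) end.

Lemma is_derive_eqv (g : R -> R) x l l' : is_derive g x l -> l = l' -> is_derive g x l'.
Proof. intros H ->; exact H. Qed.

Lemma ev_deriv f a
  (Hd : forall t, is_derive f t (Derive f t))
  (Hdd : forall t, is_derive (Derive f) t (t * f t)) e x :
  (f (a+x) <> 0 \/ noinv e = true) ->
  is_derive (ev f a e) x (ev f a (dd a e) x).
Proof.
  intros Hx. induction e; simpl.
  - auto_derive; try exact I; ring.
  - eapply is_derive_eqv.
    + apply (is_derive_comp f (fun y => a + y)). apply Hd. auto_derive; auto.
    + simpl. unfold scal; simpl. unfold mult; simpl. ring.
  - eapply is_derive_eqv.
    + apply (is_derive_comp (Derive f) (fun y => a + y)). apply Hdd. auto_derive; auto.
    + simpl. unfold scal; simpl. unfold mult; simpl. ring.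
  - destruct Hx as [Hx|Hx]; [|discriminate].
    eapply is_derive_eqv.
    + apply (is_derive_inv (fun y => f (a+y))).
      eapply is_derive_eqv.
      * apply (is_derive_comp f (fun y => a + y)). apply Hd. auto_derive; auto.
      * reflexivity.
      * exact Hx.
    + unfold scal; simpl. unfold mult; simpl. field. exact Hx.
  - auto_derive; try exact I; ring.
  - simpl in Hx. assert (H1 : f (a+x) <> 0 \/ noinv e1 = true).
    { destruct Hx as [Hx|Hx]; [left; exact Hx| right; apply andb_prop in Hx; tauto]. }
    assert (H2 : f (a+x) <> 0 \/ noinv e2 = true).
    { destruct Hx as [Hx|Hx]; [left; exact Hx| right; apply andb_prop in Hx; tauto]. }
    apply (is_derive_plus (ev f a e1) (ev f a e2)); auto.
  - simpl in Hx. assert (H1 : f (a+x) <> 0 \/ noinv e1 = true).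
    { destruct Hx as [Hx|Hx]; [left; exact Hx| right; apply andb_prop in Hx; tauto]. }
    assert (H2 : f (a+x) <> 0 \/ noinv e2 = true).
    { destruct Hx as [Hx|Hx]; [left; exact Hx| right; apply andb_prop in Hx; tauto]. }
    eapply is_derive_eqv.
    + apply (is_derive_mult (ev f a e1) (ev f a e2)); auto.
      intros; unfold mult; simpl; ring.
    + unfold plus, mult; simpl. ring.
Qed.

Lemma ev_Derive_n f a
  (Hd : forall t, is_derive f t (Derive f t))
  (Hdd : forall t, is_derive (Derive f) t (t * f t))
  (Hnz : forall x, 0 < x -> f (a+x) <> 0) n :
  forall e x, 0 < x -> Derive_n (ev f a e) n x = ev f a (itd a n e) x
                       /\ ex_derive_n (ev f a e) n x.
Proof.
  induction n; intros e x Hx.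
  - simpl. split; auto.
  - assert (Hloc : locally x (fun t => Derive_n (ev f a e) n t = ev f a (itd a n e) t)).
    { apply (filter_imp (fun t => 0 < t)).
      - intros t Ht. apply (IHn e t Ht).
      - apply (open_gt 0 x Hx). }
    assert (HD : is_derive (ev f a (itd a n e)) x (ev f a (dd a (itd a n e)) x)).
    { apply ev_deriv; auto. }
    split.
    + simpl. rewrite (Derive_ext_loc _ _ _ Hloc). apply is_derive_unique. exact HD.
    + simpl. apply (ex_derive_ext_loc (ev f a (itd a n e))).
      * apply (filter_imp _ _ (fun t H => eq_sym H) Hloc).
      * exists (ev f a (dd a (itd a n e)) x). exact HD.
Qed.

Lemma ballR x e y : ball x e y <-> Rabs (y - x) < e.
Proof. unfold ball; simpl; unfold AbsRing_ball, abs, minus, plus, opp; simpl. tauto. Qed.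

Lemma mvt (g g' : R -> R) x y : x <= y ->
  (forall z, x <= z <= y -> is_derive g z (g' z)) ->
  exists c, x <= c <= y /\ g y - g x = g' c * (y - x).
Proof.
  intros Hxy Hd.
  destruct (MVT_gen g x y g') as [c [Hc Heq]].
  - intros z Hz. rewrite Rmin_left in Hz by lra. rewrite Rmax_right in Hz by lra.
    apply Hd; lra.
  - intros z Hz. rewrite Rmin_left in Hz by lra. rewrite Rmax_right in Hz by lra.
    apply continuity_pt_filterlim. apply (ex_derive_continuous (K:=R_AbsRing) (V:=R_NormedModule)).
    exists (g' z). apply Hd; lra.
  - rewrite Rmin_left in Hc by lra. rewrite Rmax_right in Hc by lra.
    exists c; split; auto.
Qed.

Lemma mono_up (g g' : R -> R) x y : x <= y ->
  (forall z, x <= z <= y -> is_derive g z (g' z) /\ 0 <= g' z) -> g x <= g y.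
Proof.
  intros Hxy H. destruct (mvt g g' x y Hxy) as [c [Hc Heq]].
  - intros z Hz; apply H; auto.
  - destruct (H c Hc) as [_ Hp]. assert (0 <= g' c * (y - x)) by (apply Rmult_le_pos; lra). lra.
Qed.

Lemma mono_down (g g' : R -> R) x y : x <= y ->
  (forall z, x <= z <= y -> is_derive g z (g' z) /\ g' z <= 0) -> g y <= g x.
Proof.
  intros Hxy H. destruct (mvt g g' x y Hxy) as [c [Hc Heq]].
  - intros z Hz; apply H; auto.
  - destruct (H c Hc) as [_ Hp]. assert (0 <= - g' c * (y - x)) by (apply Rmult_le_pos; lra). lra.
Qed.

Lemma lim_small (f : R -> R) (Hlim : is_lim f p_infty 0) c T :
  0 < c -> exists t, T < t /\ f t ^ 2 < c.
Proof.
  intros Hc.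
  assert (HP : Rbar_locally 0 (fun y => y ^ 2 < c)).
  { simpl. assert (He : 0 < Rmin 1 c) by (apply Rmin_pos; lra).
    exists (mkposreal _ He). intros y Hy.
    assert (Hy' : Rabs (y - 0) < Rmin 1 c) by (apply ballR; exact Hy).
    rewrite Rminus_0_r in Hy'. apply Rabs_def2 in Hy'.
    assert (H1 := Rmin_l 1 c). assert (H2 := Rmin_r 1 c). simpl.
    destruct (Rle_dec 0 y); nra. }
  destruct (Hlim _ HP) as [M HM].
  exists (Rmax M T + 1). split.
  - assert (H := Rmax_r M T); lra.
  - apply HM. assert (H := Rmax_l M T); lra.
Qed.

Lemma quot l A B eta : 0 < eta -> eta <= Rabs l / 2 -> Rabs (A - l) < eta ->
  Rabs (B - l) < eta -> Rabs (A / B - 1) <= 4 * eta / Rabs l.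
Proof.
  intros He Hel HA HB.
  assert (Hl : 0 < Rabs l) by lra.
  assert (HBl : Rabs l / 2 <= Rabs B).
  { assert (H := Rabs_triang_inv l B). rewrite Rabs_minus_sym in H. lra. }
  assert (HB0 : B <> 0). { intro E; rewrite E, Rabs_R0 in HBl; lra. }
  replace (A / B - 1) with ((A - B) / B) by (field; auto).
  rewrite Rabs_div by auto.
  assert (HAB : Rabs (A - B) <= 2 * eta).
  { replace (A - B) with ((A - l) + - (B - l)) by ring.
    assert (H := Rabs_triang (A - l) (- (B - l))). rewrite Rabs_Ropp in H. lra. }
  unfold Rdiv. replace (4 * eta * / Rabs l) with ((2 * eta) * / (Rabs l / 2)) by (field; lra).
  apply Rmult_le_compat; auto.
  - apply Rabs_pos.
  - left; apply Rinv_0_lt_compat; lra.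
  - apply Rinv_le_contravar; lra.
Qed.
Definition EPsi := EM EDF EI.
Definition EPhi := EM EX EPsi.
Definition EG (a : R) := EA (EM (EA (EC a) EX) (EM EF EF)) (EM (EC (-1)) (EM EDF EDF)).
Definition EH (a : R) := EA (EM EF EDF) (EM EX (EG a)).
Definition EW := EM EF EF.

Lemma main_lemma (f : R -> R) (a : R)
  (Hd : forall t, is_derive f t (Derive f t))
  (Hdd : forall t, is_derive (Derive f) t (t * f t))
  (Hlim : is_lim f p_infty 0)
  (Hfa : f a = 0) (Hnz : forall x, 0 < x -> f (a + x) <> 0) :
  (forall (n : nat) (x : R), 0 < x -> ex_derive_n (Airy_Phi f a) n x) /\
  (forall (n : nat) (x : R), 0 < x -> ex_derive_n (Airy_Psi f a) n x) /\
  (forall x y : R, 0 < x -> x <= y -> Airy_Phi f a y <= Airy_Phi f a x) /\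
  (forall x y : R, 0 < x -> x <= y -> Airy_Psi f a y <= Airy_Psi f a x) /\
  filterlim (Airy_Phi f a) (at_right 0) (locally 1).
Proof.
  pose (G := ev f a (EG a)). pose (P := ev f a EPsi). pose (H := ev f a (EH a)).
  pose (W := ev f a EW). pose (F := fun x => f (a + x)). pose (D := fun x => Derive f (a + x)).
  assert (dG : forall x, is_derive G x (F x ^ 2)).
  { intro x. eapply is_derive_eqv. apply ev_deriv; auto. simpl. unfold F. ring. }
  assert (dH : forall x, is_derive H x ((2 * a + 3 * x) * F x ^ 2)).
  { intro x. eapply is_derive_eqv. apply ev_deriv; auto. simpl. unfold F. ring. }
  assert (dW : forall x, is_derive W x (2 * (F x * D x))).
  { intro x. eapply is_derive_eqv. apply ev_deriv; auto. simpl. unfold F, D. ring. }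
  assert (dF : forall x, is_derive F x (D x)).
  { intro x. eapply is_derive_eqv. apply (ev_deriv f a Hd Hdd EF); auto. simpl. reflexivity. }
  assert (dD : forall x, is_derive D x ((a + x) * F x)).
  { intro x. eapply is_derive_eqv. apply (ev_deriv f a Hd Hdd EDF); auto. simpl. reflexivity. }
  assert (dP : forall x, 0 < x -> is_derive P x (G x / F x ^ 2)).
  { intros x Hx. eapply is_derive_eqv. apply ev_deriv; auto. simpl. unfold G, F; simpl.
    field. auto. }
  assert (dP2 : forall x, 0 < x -> G x / F x ^ 2 = a + x - P x ^ 2).
  { intros x Hx. unfold G, F, P; simpl. field. auto. }
  assert (dPhi : forall x, 0 < x -> is_derive (ev f a EPhi) x (H x / F x ^ 2)).
  { intros x Hx. eapply is_derive_eqv. apply ev_deriv; auto. simpl. unfold H, F; simpl.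
    field. auto. }
  assert (HF2 : forall x, 0 < x -> 0 < F x ^ 2).
  { intros x Hx. apply pow2_gt_0. apply Hnz; auto. }
  assert (HPF : forall x, 0 < x -> F x * D x = P x * F x ^ 2).
  { intros x Hx. unfold P, F, D; simpl. field. auto. }
  assert (Gmono : forall x y, x <= y -> G x <= G y).
  { intros x y Hxy. apply (mono_up G (fun z => F z ^ 2)); auto.
    intros z _; split; auto. apply pow2_ge_0. }
  assert (Wcontra : forall x1, 0 < x1 -> ~ (forall y, x1 <= y -> W x1 <= W y)).
  { intros x1 Hx1 HW. 
    destruct (lim_small f Hlim (W x1) (a + x1)) as [t [Ht Hft]].
    { unfold W; simpl. assert (h := HF2 x1 Hx1). unfold F in h. simpl in h. nra. }
    assert (h := HW (t - a) ltac:(lra)). unfold W in h; simpl in h.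
    replace (a + (t - a)) with t in h by ring. unfold W in Hft; simpl in Hft. nra. }
  assert (Gneg : forall x0, 0 < x0 -> G x0 <= 0).
  { intros x0 Hx0. destruct (Rle_lt_dec (G x0) 0) as [|Hpos]; [auto|exfalso].
    assert (HPinc : forall x y, x0 <= x -> x <= y -> P x <= P y).
    { intros x y Hx Hxy. apply (mono_up P (fun z => G z / F z ^ 2)); auto.
      intros z Hz0; split. apply dP; lra.
      assert (G x0 <= G z) by (apply Gmono; lra).
      unfold Rdiv. apply Rmult_le_pos. lra. left; apply Rinv_0_lt_compat, HF2; lra. }
    destruct (classic (exists x1, x0 <= x1 /\ 0 < P x1)) as [[x1 [Hx1 Hp1]] | Hno].
    - apply (Wcontra x1 ltac:(lra)). intros y Hy.
      apply (mono_up W (fun z => 2 * (F z * D z))); auto.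
      intros z Hz0; split; auto. rewrite HPF by lra.
      assert (P x1 <= P z) by (apply HPinc; lra). assert (0 < F z ^ 2) by (apply HF2; lra).
      nra.
    - assert (Hle : forall x1, x0 <= x1 -> P x1 <= 0).
      { intros x1 Hx1. destruct (Rle_lt_dec (P x1) 0); auto. exfalso; apply Hno; eauto. }
      set (C := P x0). assert (HC : C <= 0) by (apply Hle; lra).
      set (T := Rmax x0 (1 - a + C ^ 2)). set (L := 1 - C).
      assert (HT1 := Rmax_l x0 (1 - a + C ^ 2)). assert (HT2 := Rmax_r x0 (1 - a + C ^ 2)).
      fold T in HT1, HT2.
      destruct (mvt P (fun z => a + z - P z ^ 2) T (T + L)) as [c [Hc Heq]].
      { unfold L; lra. }
      { intros z Hz. eapply is_derive_eqv. apply dP; lra. apply dP2; lra. }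
      assert (h1 : C <= P c) by (apply HPinc; lra).
      assert (h2 : P c <= 0) by (apply Hle; lra).
      assert (h3 : C <= P T) by (apply HPinc; lra).
      assert (h4 : P (T + L) <= 0) by (apply Hle; unfold L; lra).
      assert (h5 : P c ^ 2 <= C ^ 2) by nra.
      assert (h6 : 1 <= a + c - P c ^ 2) by lra.
      assert (h7 : L <= (a + c - P c ^ 2) * (T + L - T)).
      { replace (T + L - T) with L by ring. unfold L in *. nra. }
      unfold L in *. lra. }
  assert (F0 : F 0 = 0). { unfold F. rewrite Rplus_0_r. exact Hfa. }
  assert (D0 : D 0 <> 0).
  { intro E.
    assert (G0 : G 0 = 0). { unfold G; simpl. fold (F 0) (D 0). rewrite F0, E. ring. }
    assert (Gh : 0 <= G (/2)) by (rewrite <- G0; apply Gmono; lra).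
    destruct (mvt G (fun z => F z ^ 2) (/2) 1) as [c [Hc Heq]]; [lra| intros; apply dG |].
    assert (0 < F c ^ 2) by (apply HF2; lra).
    assert (G 1 <= 0) by (apply Gneg; lra). nra. }
  assert (Hneg : forall x1, 0 < x1 -> H x1 <= 0).
  { intros x1 Hx1. destruct (Rle_lt_dec (H x1) 0) as [|Hpos]; [auto|exfalso].
    destruct (Rle_lt_dec 0 (2 * a + 3 * x1)) as [Hs|Hs].
    - assert (Hinc : forall y, x1 <= y -> H x1 <= H y).
      { intros y Hy. apply (mono_up H (fun z => (2 * a + 3 * z) * F z ^ 2)); auto.
        intros z Hz; split; auto. apply Rmult_le_pos. lra. apply pow2_ge_0. }
      apply (Wcontra x1 Hx1). intros y Hy.
      apply (mono_up W (fun z => 2 * (F z * D z))); auto.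
      intros z Hz; split; auto.
      assert (H x1 <= H z) by (apply Hinc; lra).
      assert (G z <= 0) by (apply Gneg; lra).
      assert (HHz : H z = F z * D z + z * G z) by (unfold H, F, D, G; simpl; ring).
      nra.
    - assert (H x1 <= H 0).
      { apply (mono_down H (fun z => (2 * a + 3 * z) * F z ^ 2)); [lra|].
        intros z Hz; split; auto. assert (0 <= F z ^ 2) by apply pow2_ge_0. nra. }
      assert (H 0 = 0). { unfold H; simpl. fold (F 0). rewrite F0. ring. }
      lra. }
  split; [|split; [|split; [|split]]].
  - intros n x Hx. change (ex_derive_n (ev f a EPhi) n x).
    apply (ev_Derive_n f a Hd Hdd Hnz n EPhi x Hx).
  - intros n x Hx. change (ex_derive_n (ev f a EPsi) n x).
    apply (ev_Derive_n f a Hd Hdd Hnz n EPsi x Hx).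
  - intros x y Hx Hxy. change (ev f a EPhi y <= ev f a EPhi x).
    apply (mono_down _ (fun z => H z / F z ^ 2)); auto.
    intros z Hz; split. apply dPhi; lra.
    assert (H z <= 0) by (apply Hneg; lra). assert (0 < / F z ^ 2) by (apply Rinv_0_lt_compat, HF2; lra).
    unfold Rdiv. nra.
  - intros x y Hx Hxy. change (P y <= P x).
    apply (mono_down _ (fun z => G z / F z ^ 2)); auto.
    intros z Hz; split. apply dP; lra.
    assert (G z <= 0) by (apply Gneg; lra). assert (0 < / F z ^ 2) by (apply Rinv_0_lt_compat, HF2; lra).
    unfold Rdiv. nra.
  -
    set (l := D 0).
    assert (Hl : 0 < Rabs l) by (apply Rabs_pos_lt; auto).
    assert (Hcont : forall eta, 0 < eta -> exists delta : posreal,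
               forall z, Rabs z < delta -> Rabs (D z - l) < eta).
    { intros eta Heta.
      assert (Hc : continuous D 0).
      { apply (ex_derive_continuous (K:=R_AbsRing) (V:=R_NormedModule)). exists ((a + 0) * F 0). apply dD. }
      destruct (proj1 (filterlim_locally D (D 0)) Hc (mkposreal _ Heta)) as [delta Hdel].
      exists delta. intros z Hz. apply ballR. apply Hdel. apply ballR. rewrite Rminus_0_r. exact Hz. }
    apply filterlim_locally. intros eps.
    assert (Heta : 0 < Rmin (Rabs l / 2) (eps * Rabs l / 8)).
    { apply Rmin_pos. lra. assert (h := cond_pos eps). nra. }
    destruct (Hcont _ Heta) as [delta Hdel].
    exists delta. intros y Hy Hy0. simpl in Hy0.
    assert (Hy' : Rabs (y - 0) < delta) by (apply ballR; exact Hy).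
    rewrite Rminus_0_r in Hy'.
    apply ballR.
    destruct (mvt F D 0 y) as [c [Hc Heq]]; [lra| intros; apply dF |].
    rewrite F0 in Heq.
    assert (Hyc : Rabs (D y - l) < Rmin (Rabs l / 2) (eps * Rabs l / 8)) by (apply Hdel; auto).
    assert (Hcc : Rabs (D c - l) < Rmin (Rabs l / 2) (eps * Rabs l / 8)).
    { apply Hdel. rewrite Rabs_pos_eq by lra. rewrite Rabs_pos_eq in Hy' by lra. lra. }
    assert (HFy : F y <> 0) by (apply Hnz; auto).
    assert (HDc : D c <> 0).
    { intro E. rewrite E in Heq. apply HFy. lra. }
    assert (Hphi : Airy_Phi f a y = D y / D c).
    { unfold Airy_Phi, Airy_Psi. fold (D y). fold (F y).
      replace (F y) with (D c * y) by lra. field. split; lra. }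
    rewrite Hphi.
    assert (Hq := quot l (D y) (D c) _ Heta (Rmin_l _ _) Hyc Hcc).
    assert (h := Rmin_r (Rabs l / 2) (eps * Rabs l / 8)).
    assert (h2 : 4 * Rmin (Rabs l / 2) (eps * Rabs l / 8) / Rabs l <= eps / 2).
    { unfold Rdiv at 1. apply (Rmult_le_reg_r (Rabs l)); auto.
      rewrite Rmult_assoc, Rinv_l by lra. assert (h3 := cond_pos eps). nra. }
    assert (h3 := cond_pos eps). lra.
Qed.

Theorem lemma4p1 (Ai : R -> R) (a1 : R)
  (HAi : is_Airy Ai) (Ha1 : largest_zero Ai a1) :
  (forall (n : nat) (x : R), 0 < x -> ex_derive_n (Airy_Phi Ai a1) n x) /\
  (forall (n : nat) (x : R), 0 < x -> ex_derive_n (Airy_Psi Ai a1) n x) /\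
  (forall x y : R, 0 < x -> x <= y -> Airy_Phi Ai a1 y <= Airy_Phi Ai a1 x) /\
  (forall x y : R, 0 < x -> x <= y -> Airy_Psi Ai a1 y <= Airy_Psi Ai a1 x) /\
  filterlim (Airy_Phi Ai a1) (at_right 0) (locally 1).
Proof.
  destruct HAi as [Hex [Hdd Hlim]]. destruct Ha1 as [Hz Hnz0].
  apply main_lemma; auto.
  - intro t. apply Derive_correct. apply Hex.
  - intros x Hx. apply Hnz0. lra.
Qed.
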